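(* Let $X$ be a real Banach space, $Y$ a closed subspace of $X$, $(\Omega,\Sigma,\mu)$ a complete probability space, $1\leq p<\infty$ and $n$ a positive integer. Let $f_1,\ldots,f_n\in L_p(\mu,X)$ and $g\in L_p(\mu,Y)$. If for almost all $s\in\Omega$, $g(s)$ is a relative $p$-center of $\{f_1(s),\ldots,f_n(s)\}$ in $Y$, then $g$ is a relative $p$-center of $\{f_1,\ldots,f_n\}\subset L_p(\mu,X)$ in $L_p(\mu,Y)$, i.e. $\sum_{i=1}^n\|f_i-g\|_p^p\leq\sum_{i=1}^n\|f_i-h\|_p^p$ for all $h\in L_p(\mu,Y)$.
   Context: $L_p(\mu,X)$ denotes the Banach space of Bochner $p$-integrable functions $\Omega\to X$ with norm $\|f\|_p=(\int_\Omega\|f(s)\|^p\,d\mu(s))^{1/p}$, and $L_p(\mu,Y)$ the subspace of those with values in $Y$. For a subset $Y$ of a normed space $X$, a finite set $\{a_1,\ldots,a_n\}\subset X$ and $m\in[1,\infty)$, a point $y_0\in Y$ is a relative $m$-center of $\{a_1,\ldots,a_n\}$ in $Y$ if $\sum_{i=1}^n\|a_i-y_0\|^m\leq\sum_{i=1}^n\|a_i-y\|^m$ for all $y\in Y$. *)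

(* Defs.v *)
From HB Require Import structures.
From mathcomp Require Import all_boot all_order all_algebra.
From mathcomp Require Import all_classical all_reals all_analysis.
Set Implicit Arguments. Unset Strict Implicit. Unset Printing Implicit Defensive.
Import Order.TTheory GRing.Theory Num.Theory.
Import numFieldNormedType.Exports.
Local Open Scope classical_set_scope.
Local Open Scope ring_scope.

Definition simple_fun d (T : measurableType d) (X : Type) (phi : T -> X) :=
  finite_set (range phi) /\ forall x : X, measurable (phi @^-1` [set x]).

Definition strongly_measurable d (T : measurableType d) (R : realType)
    (mu : {measure set T -> \bar R}) (X : normedModType R) (f : T -> X) :=
  exists phi : nat -> T -> X, (forall k, simple_fun (phi k)) /\
    {ae mu, forall s, (fun k => phi k s) @ \oo --> f s}.

Definition Lp_norm_pow d (T : measurableType d) (R : realType)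
    (mu : {measure set T -> \bar R}) (X : normedModType R) (p : R) (f : T -> X)
    : \bar R :=
  (\int[mu]_s (`|f s| `^ p)%:E)%E.

Definition in_Lp d (T : measurableType d) (R : realType)
    (mu : {measure set T -> \bar R}) (X : normedModType R) (p : R) (f : T -> X) :=
  strongly_measurable mu f /\ (Lp_norm_pow mu p f < +oo)%E.

Definition in_LpY d (T : measurableType d) (R : realType)
    (mu : {measure set T -> \bar R}) (X : normedModType R) (Y : set X) (p : R)
    (f : T -> X) :=
  in_Lp mu p f /\ forall s, Y (f s).

Definition linear_subspace (R : realType) (X : normedModType R) (Y : set X) :=
  Y 0 /\ (forall x y, Y x -> Y y -> Y (x + y)) /\
  (forall (a : R) x, Y x -> Y (a *: x)).

Definition rel_center (R : realType) (X : normedModType R) (Y : set X) (n : nat)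
    (a : 'I_n -> X) (m : R) (y0 : X) :=
  Y y0 /\ forall y, Y y -> \sum_(i < n) `|a i - y0| `^ m <= \sum_(i < n) `|a i - y| `^ m.

(* relative m-center in L_p(mu,Y) of f_1..f_n, with distance given by the L_p norm
   (the sums of ||f_i - g||_p^p are finite for members of L_p, compared in \bar R). *)
Definition Lp_rel_center d (T : measurableType d) (R : realType)
    (mu : {measure set T -> \bar R}) (X : normedModType R) (Y : set X) (p : R)
    (n : nat) (f : 'I_n -> T -> X) (g : T -> X) :=
  in_LpY mu Y p g /\
  forall h, in_LpY mu Y p h ->
    (\sum_(i < n) Lp_norm_pow mu p (fun s => (f i s - g s)%R)
      <= \sum_(i < n) Lp_norm_pow mu p (fun s => (f i s - h s)%R))%E.

(* Main.v *)
Require Import Defs.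
From HB Require Import structures.
From mathcomp Require Import all_boot all_order all_algebra.
From mathcomp Require Import all_classical all_reals all_analysis.
From mathcomp Require Import measurable_realfun.
Import Order.TTheory GRing.Theory Num.Theory.
Import numFieldNormedType.Exports.
Local Open Scope classical_set_scope.
Local Open Scope ring_scope.

Section helpers.
Context (R : realType) (d : measure_display) (T : measurableType d).

Lemma simple_preimage (X : Type) (phi : T -> X) (A : set X) :
  simple_fun phi -> measurable (phi @^-1` A).
Proof.
move=> [fin mphi].
have -> : phi @^-1` A = \bigcup_(x in range phi `&` A) phi @^-1` [set x].
  apply/seteqP; split => [s As|s [x [_ Ax] /= ->]] //.
  by exists (phi s) => //; split => //; exists s.
apply: fin_bigcup_measurable => //; exact: finite_setIl.
Qed.

Lemma simple2_measurable (X : Type) (phi psi : T -> X) (F : X -> X -> R) :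
  simple_fun phi -> simple_fun psi ->
  measurable_fun setT (fun s => F (phi s) (psi s)).
Proof.
move=> sphi spsi _ B mB; rewrite setTI.
have -> : (fun s => F (phi s) (psi s)) @^-1` B =
  \bigcup_(x in range phi) (phi @^-1` [set x] `&`
      psi @^-1` [set y | B (F x y)]).
  apply/seteqP; split => [s Bs|s [x _ [/= -> Bs]]] //.
  by exists (phi s); [exists s|split].
apply: fin_bigcup_measurable; first by case: sphi.
move=> x _; apply: measurableI; exact: simple_preimage.
Qed.

Lemma ae_cvg_measurable (mu : {measure set T -> \bar R})
  (u : nat -> T -> R) (F : T -> R) :
  measure_is_complete mu -> (forall k, measurable_fun setT (u k)) ->
  {ae mu, forall s, u ^~ s @ \oo --> F s} -> measurable_fun setT F.
Proof.
move=> cmu mu_ [N0 [mN0 N00 sub]].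
have mD : measurable (~` N0) by exact: measurableC.
have mF : measurable_fun (~` N0) F.
  apply: (measurable_realfun.measurable_fun_cvg (h := u)).
    by move=> m; exact: measurable_funS (mu_ m).
  move=> x Nx; apply: contrapT => H; apply: Nx; apply: sub; exact: H.
move=> _ B mB; rewrite setTI.
have -> : F @^-1` B = (~` N0 `&` F @^-1` B) `|` (N0 `&` F @^-1` B).
  apply/seteqP; split => [s Bs|s [[]|[]]] //.
  by have [Ns|Ns] := pselect (N0 s); [right|left].
apply: measurableU; first exact: mF.
apply: cmu; exists N0; split => //; exact: subIsetl.
Qed.

Lemma sm_norm_measurable (mu : {measure set T -> \bar R})
  (X : normedModType R) (f g : T -> X) :
  measure_is_complete mu -> strongly_measurable mu f -> strongly_measurable mu g ->
  measurable_fun setT (fun s => `|f s - g s|).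
Proof.
move=> cmu [phi [sphi cphi]] [psi [spsi cpsi]].
apply: (@ae_cvg_measurable mu (fun k s => `|phi k s - psi k s|)) => //.
  move=> k; exact: (@simple2_measurable X _ _ (fun x y => `|x - y|)) .
case: cphi => N1 [mN1 N10 s1]; case: cpsi => N2 [mN2 N20 s2].
exists (N1 `|` N2); split; first exact: measurableU.
  apply/eqP; rewrite eq_le measure_ge0 andbT.
  apply: (le_trans (measureU2 _ _ _)) => //.
  rewrite [X in (X + _)%E](_ : _ = 0%E); last exact: N10.
  by rewrite [X in (_ + X)%E](_ : _ = 0%E) ?adde0; last exact: N20.
move=> s /= H; apply: contrapT => H'; apply: H.
apply: cvg_norm; apply: cvgB.
  by apply: contrapT => c; apply: H'; left; exact: s1.
by apply: contrapT => c; apply: H'; right; exact: s2.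
Qed.

End helpers.

Theorem mainTheorem3 (R : realType) (X : completeNormedModType R) (Y : set X)
  (d : measure_display) (T : measurableType d) (mu : probability T R)
  (p : R) (n : nat) (f : 'I_n -> T -> X) (g : T -> X) :
  linear_subspace Y -> closed Y ->
  measure_is_complete mu ->
  1 <= p -> (0 < n)%N ->
  (forall i, in_Lp mu p (f i)) ->
  in_LpY mu Y p g ->
  {ae mu, forall s, rel_center Y (fun i => f i s) p (g s)} ->
  Lp_rel_center mu Y p f g.
Proof.
move=> _ _ cmu p1 _ fLp gLp Hae; split => // h [[hsm _] hY].
have mE (u : T -> X) i : strongly_measurable mu u ->
    measurable_fun [set: T] (fun s : T => ((`|f i s - u s| `^ p)%:E : \bar R)).
  move=> su; apply/measurable_EFinP.
  apply: (measurableT_comp (measurable_realfun.measurable_powR _)).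
  exact: (@sm_norm_measurable R d T mu X (f i) u cmu (fLp i).1 su).
rewrite /Lp_norm_pow.
have E (u : T -> X) : strongly_measurable mu u ->
  (\sum_(i < n) \int[mu]_s (`|f i s - u s| `^ p)%:E =
   \int[mu]_s \sum_(i < n) (`|f i s - u s| `^ p)%:E)%E.
  move=> su; rewrite ge0_integral_sum //;
    (try by move=> i; exact: mE); by move=> i s _; rewrite lee_fin powR_ge0.
have gsm : strongly_measurable mu g by case: gLp => -[].
rewrite (E _ gsm) (E _ hsm).
apply: ae_ge0_le_integral => //.
- by move=> s _; apply: sume_ge0 => i _; rewrite lee_fin powR_ge0.
- by apply: emeasurable_sum => i; apply: mE.
- by move=> s _; apply: sume_ge0 => i _; rewrite lee_fin powR_ge0.
- by apply: emeasurable_sum => i; apply: mE.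
apply: filterS Hae => s [_ Hs] _.
rewrite !sumEFin lee_fin; exact: Hs.
Qed.
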